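(* Let $f:\mathbb{R}^m\to\mathbb{R}^n$ be a ReLU network with $l$ hidden layers and $N$ neurons in total, and let $\mathrm{code}_f:\mathbb{R}^m\to\{0,1\}^N$ be its ReLU code map. For $\vec x,\vec y\in\mathbb{R}^m$ define $\vec x\sim_f\vec y$ iff $d_{\mathrm H}(\mathrm{code}_f(\vec x),\mathrm{code}_f(\vec y))=0$, and let $[\vec x]_f=\{\vec z\in\mathbb{R}^m\mid \vec z\sim_f\vec x\}$ denote the equivalence classes. Then: (1) There is a one-to-one correspondence between the code space $\mathcal{X}_f=\{\mathrm{code}_f(\vec x)\mid \vec x\in\mathbb{R}^m\}$ and the set of equivalence classes $\{[\vec x]_f\mid \vec x\in\mathbb{R}^m\}$. (2) For every $\vec x\in\mathbb{R}^m$, the topological closure $\overline{[\vec x]_f}$ of $[\vec x]_f$ is a polyhedron, i.e. the intersection of a finite number of closed half-spaces (or all of $\mathbb{R}^m$). (3) For every $\vec x\in\mathbb{R}^m$, the equivalence class $[\vec x]_f$ is the disjoint union of the relative interiors $\mathrm{relint}(F)$ of faces $F$ of the polyhedron $P=\overline{[\vec x]_f}$, and these relative interiors form a lattice structure (with $\mathrm{relint}(F_1)\prec\mathrm{relint}(F_2)$ iff $F_1\subseteq F_2$, inherited from the face lattice of $P$ ordered by inclusion).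
   Context: A ReLU network is a function $f(\vec x)=\xi\circ\mathrm{relu}\circ g_l\circ\cdots\circ\mathrm{relu}\circ g_1(\vec x)$, where $\mathrm{relu}(z)=\max\{0,z\}$ is applied componentwise, $\xi$ is an output function, and each $g_k:\mathbb{R}^{n_{k-1}}\to\mathbb{R}^{n_k}$ ($n_0=m$) is affine, $g_k(\vec x)=W_k\vec x+\vec b_k$. The total number of neurons is $N=\sum_{k=1}^l n_k$. The activation vector at layer $k$ is $\vec a_k(\vec x)=(a^{(k)}_1(\vec x),\dots,a^{(k)}_{n_k}(\vec x))=\mathrm{relu}\circ g_k\circ\cdots\circ\mathrm{relu}\circ g_1(\vec x)$. The ReLU code of $\vec x$ is $\mathrm{code}_f(\vec x)=(\beta^{(1)}_1,\dots,\beta^{(1)}_{n_1},\dots,\beta^{(l)}_1,\dots,\beta^{(l)}_{n_l})\in\{0,1\}^N$ with $\beta^{(k)}_i=1$ if $a^{(k)}_i(\vec x)>0$ and $\beta^{(k)}_i=0$ otherwise. $d_{\mathrm H}(a,b)=|\{j\in\{1,\dots,N\}\mid a_j\neq b_j\}|$ is the Hamming distance on $\{0,1\}^N$. For a convex set $F$, $\mathrm{relint}(F)$ is its interior relative to its affine hull. *)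

(* Defs.v *)
From HB Require Import structures.
From mathcomp Require Import all_boot all_order all_algebra.
From mathcomp Require Import all_classical all_reals topology normedtype.
Set Implicit Arguments. Unset Strict Implicit. Unset Printing Implicit Defensive.
Import Order.TTheory GRing.Theory Num.Theory numFieldNormedType.Exports.
Local Open Scope ring_scope.
Local Open Scope classical_set_scope.

Section ReLU.
Variable R : realType.

(* A ReLU network with input dimension n (index) and output dimension p.
   NetLayer W b g : first apply x |-> relu (W x + b) (hidden layer of width k),
   then the rest g. *)
Inductive relu_net (p : nat) : nat -> Type :=
| NetOut : forall n, ('cV[R]_n -> 'cV[R]_p) -> relu_net p n
| NetLayer : forall n k, 'M[R]_(k, n) -> 'cV[R]_k -> relu_net p k -> relu_net p n.

Definition relu (z : R) : R := Num.max 0 z.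

Fixpoint neurons p n (f : relu_net p n) : nat :=
  match f with
  | NetOut _ _ => 0%N
  | NetLayer _ k _ _ g => (k + neurons g)%N
  end.

Fixpoint net_eval p n (f : relu_net p n) : 'cV[R]_n -> 'cV[R]_p :=
  match f in relu_net _ n0 return 'cV[R]_n0 -> 'cV[R]_p with
  | NetOut _ xi => xi
  | NetLayer _ _ W b g => fun x => net_eval g (map_mx relu (W *m x + b))
  end.

Fixpoint relu_code p n (f : relu_net p n) : 'cV[R]_n -> seq bool :=
  match f in relu_net _ n0 return 'cV[R]_n0 -> seq bool with
  | NetOut _ _ => fun _ => [::]
  | NetLayer _ k W b g => fun x =>
      let a := map_mx relu (W *m x + b) in
      [seq (0 < a i 0) | i <- enum 'I_k] ++ relu_code g a
  end.

Definition hamming (N : nat) (u v : seq bool) : nat :=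
  #|[set j : 'I_N | nth false u j != nth false v j]|.

Definition relu_equiv p m (f : relu_net p m) (x y : 'cV[R]_m) : Prop :=
  hamming (neurons f) (relu_code f x) (relu_code f y) = 0%N.

Definition relu_class p m (f : relu_net p m) (x : 'cV[R]_m) : set 'cV[R]_m :=
  [set z | relu_equiv f z x].

Definition dotv m (a z : 'cV[R]_m) : R := \sum_(i < m) a i 0 * z i 0.

Definition polyhedron m (P : set 'cV[R]_m) : Prop :=
  exists s : seq ('cV[R]_m * R),
    (forall h, h \in s -> h.1 != 0) /\
    P = [set z | forall h, h \in s -> dotv h.1 z <= h.2].

(* faces of a convex set P: intersections of P with supporting hyperplanes
   (a = 0 allowed, giving P itself and the empty face) *)
Definition face m (P F : set 'cV[R]_m) : Prop :=
  exists (a : 'cV[R]_m) (beta : R),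
    (forall z, P z -> dotv a z <= beta) /\
    F = P `&` [set z | dotv a z = beta].

Definition aff_hull m (F : set 'cV[R]_m) : set 'cV[R]_m :=
  [set z | exists s : seq ('cV[R]_m * R),
     (forall h, h \in s -> F h.1) /\ \sum_(h <- s) h.2 = 1 /\
     z = \sum_(h <- s) h.2 *: h.1].

Definition relint m (F : set 'cV[R]_m) : set 'cV[R]_m :=
  [set z | F z /\ exists e : R, 0 < e /\
     (forall y, aff_hull F y -> ball z e y -> F y)].

End ReLU.

(* Main.v *)
Require Import Defs.
From HB Require Import structures.
From mathcomp Require Import all_boot all_order all_algebra.
From mathcomp Require Import all_classical all_reals topology normedtype.
From mathcomp Require Import ring lra zify.
Import Order.TTheory GRing.Theory Num.Theory numFieldNormedType.Exports.
Local Open Scope ring_scope.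
Local Open Scope classical_set_scope.
Section Dot.
Variables (R : realType) (m : nat).
Local Notation V := 'cV[R]_m.

Lemma dotvDr (a u v : V) : dotv a (u + v) = dotv a u + dotv a v.
Proof. by rewrite /dotv -big_split; apply: eq_bigr => i _; rewrite mxE mulrDr. Qed.
Lemma dotvZr (a v : V) k : dotv a (k *: v) = k * dotv a v.
Proof. by rewrite /dotv mulr_sumr; apply: eq_bigr => i _; rewrite mxE mulrCA. Qed.
Lemma dotv0r (a : V) : dotv a 0 = 0.
Proof. by rewrite /dotv big1 // => i _; rewrite mxE mulr0. Qed.
Lemma dotvDl (a b v : V) : dotv (a + b) v = dotv a v + dotv b v.
Proof. by rewrite /dotv -big_split; apply: eq_bigr => i _; rewrite mxE mulrDl. Qed.
Lemma dotv0l (v : V) : dotv 0 v = 0.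
Proof. by rewrite /dotv big1 // => i _; rewrite mxE mul0r. Qed.
Lemma dotvNl (a v : V) : dotv (- a) v = - dotv a v.
Proof. by rewrite /dotv -sumrN; apply: eq_bigr => i _; rewrite mxE mulNr. Qed.
Lemma dotv_suml I (r : seq I) (Q : pred I) (F : I -> V) v :
  dotv (\sum_(i <- r | Q i) F i) v = \sum_(i <- r | Q i) dotv (F i) v.
Proof. exact: (big_morph (fun a => dotv a v) (fun a b => dotvDl a b v) (dotv0l v)). Qed.
Lemma dotv_sumr I (r : seq I) (Q : pred I) (F : I -> V) a :
  dotv a (\sum_(i <- r | Q i) F i) = \sum_(i <- r | Q i) dotv a (F i).
Proof. exact: (big_morph (fun v => dotv a v) (dotvDr a) (dotv0r a)). Qed.

Definition nrm1 (a : V) := \sum_i `|a i 0|.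
Lemma nrm1_ge0 a : 0 <= nrm1 a.
Proof. by apply: sumr_ge0 => i _. Qed.

Lemma dotv_bound (a v : V) e : (forall i, `|v i 0| <= e) -> `|dotv a v| <= nrm1 a * e.
Proof.
move=> H; rewrite /dotv /nrm1 mulr_suml; apply: le_trans (ler_norm_sum _ _ _) _.
apply: ler_sum => i _; rewrite normrM; apply: ler_wpM2l => //.
Qed.

Lemma entry_bound (h : 'I_m -> R) : exists M, 0 <= M /\ forall i, `|h i| <= M.
Proof.
exists (\sum_i `|h i|); split; first by apply: sumr_ge0.
move=> i; rewrite (bigD1 i) //= lerDl; exact: sumr_ge0.
Qed.

Lemma ballE (z y : V) e : ball z e y <-> 0 < e /\ forall i, `|z i 0 - y i 0| < e.
Proof.
split; first by case=> e0 H; split => // i; exact: H.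
case=> e0 H; split => // i j; have -> : j = 0 by apply: ord1.
exact: H.
Qed.

Lemma dotv_cont (a w : V) g : 0 < g ->
  exists2 d, 0 < d & forall y, ball w d y -> `|dotv a w - dotv a y| < g.
Proof.
move=> g0; have n0 := nrm1_ge0 a.
exists (g / (nrm1 a + 1)); first by apply: divr_gt0 => //; lra.
move=> y /ballE [d0 H].
have : `|dotv a (w - y)| <= nrm1 a * (g / (nrm1 a + 1)).
  apply: dotv_bound => i; rewrite mxE; apply: ltW.
  by have := H i; rewrite !mxE.
have -> : dotv a (w - y) = dotv a w - dotv a y.
  by rewrite dotvDr -scaleN1r dotvZr; ring.
move=> /le_lt_trans; apply.
rewrite mulrA ltr_pdivrMr; last lra.
nra.
Qed.

End Dot.
Section Poly.
Variables (R : realType) (m : nat).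
Local Notation V := 'cV[R]_m.
Definition cstr := (V * R * bool)%type.
Definition sat (s : seq cstr) (z : V) : Prop := forall c, c \in s ->
  if c.2 then dotv c.1.1 z < c.1.2 else dotv c.1.1 z <= c.1.2.

Variable s : seq cstr.
Definition Pset : set V := [set z | forall c, c \in s -> dotv c.1.1 z <= c.1.2].
Definition tight (z : V) (c : cstr) : bool := dotv c.1.1 z == c.1.2.
Definition Fz (z : V) : set V :=
  [set w | Pset w /\ forall c, c \in s -> tight z c -> tight w c].
Definition mid (u v : V) : V := 2^-1 *: (u + v).

Lemma dotv_mid a u v : dotv a (mid u v) = (dotv a u + dotv a v) / 2.
Proof. by rewrite dotvZr dotvDr mulrC. Qed.

Lemma sat_P z : sat s z -> Pset z.
Proof. by move=> H c cs; have := H c cs; case: c.2 => //; apply: ltW. Qed.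

Lemma sat_mid u v : sat s u -> sat s v -> sat s (mid u v).
Proof.
move=> Hu Hv c cs; have := Hu c cs; have := Hv c cs; rewrite dotv_mid.
by case: c.2 => ? ?; lra.
Qed.

Lemma P_mid u v : Pset u -> Pset v -> Pset (mid u v).
Proof.
move=> Hu Hv c cs; have := Hu c cs; have := Hv c cs; rewrite dotv_mid; lra.
Qed.

Lemma tight_mid u v c : c \in s -> Pset u -> Pset v ->
  tight (mid u v) c = tight u c && tight v c.
Proof.
move=> cs Hu Hv; have := Hu c cs; have := Hv c cs; rewrite /tight dotv_mid.
move=> h1 h2.
case: (eqVneq (dotv c.1.1 u) c.1.2) => e1; case: (eqVneq (dotv c.1.1 v) c.1.2) => e2 /=.
- by apply/eqP; lra.
- apply/negbTE/eqP; lra.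
- apply/negbTE/eqP; lra.
- apply/negbTE/eqP; lra.
Qed.

Lemma Fz_self z : Pset z -> Fz z z.
Proof. by move=> Pz; split. Qed.

Lemma Fz_P z w : Fz z w -> Pset w.
Proof. by case. Qed.

Lemma Fz_sub z v : (forall c, c \in s -> tight z c -> tight v c) -> Fz v `<=` Fz z.
Proof. by move=> H w [Pw Hw]; split => // c cs /(H c cs); apply: Hw. Qed.

Lemma Fz_subP z v : Pset v -> Fz v `<=` Fz z ->
  forall c, c \in s -> tight z c -> tight v c.
Proof. by move=> Pv /(_ v (Fz_self _ Pv)) [_ H]. Qed.

Lemma Fz_mid z u v : Pset u -> Pset v -> Fz z u -> Fz z v -> Fz z (mid u v).
Proof.
move=> Pu Pv [_ Hu] [_ Hv]; split; first exact: P_mid.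
by move=> c cs tc; rewrite tight_mid // Hu // Hv.
Qed.

Lemma psum_ge0 (t : seq cstr) (Q : pred cstr) (F : cstr -> R) :
  (forall c, c \in t -> Q c -> 0 <= F c) -> 0 <= \sum_(c <- t | Q c) F c.
Proof.
elim: t => [|c t IH] H; first by rewrite big_nil.
rewrite big_cons; have IH' : 0 <= \sum_(c <- t | Q c) F c.
  by apply: IH => d dt; apply: H; rewrite inE dt orbT.
case: ifP => // Qc; apply: addr_ge0 => //; apply: H => //; exact: mem_head.
Qed.

Lemma psum_eq0 (t : seq cstr) (Q : pred cstr) (F : cstr -> R) :
  (forall c, c \in t -> Q c -> 0 <= F c) -> \sum_(c <- t | Q c) F c = 0 ->
  forall c, c \in t -> Q c -> F c = 0.
Proof.
elim: t => [|c t IH] H; first by move=> _ c; rewrite in_nil.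
have H' : forall d, d \in t -> Q d -> 0 <= F d.
  by move=> d dt; apply: H; rewrite inE dt orbT.
have g0 := psum_ge0 _ _ _ H'.
rewrite big_cons; case: ifP => Qc.
- have Fc := H c (mem_head _ _) Qc.
  move=> /eqP; rewrite paddr_eq0 // => /andP[/eqP e1 /eqP e2] d.
  rewrite inE => /orP[/eqP -> //|dt]; exact: IH.
- move=> e d; rewrite inE => /orP[/eqP -> |dt]; first by rewrite Qc.
  exact: IH.
Qed.

Lemma face_Fz z : face Pset (Fz z).
Proof.
exists (\sum_(c <- s | tight z c) c.1.1), (\sum_(c <- s | tight z c) c.1.2).
split.
  move=> w Pw; rewrite dotv_suml big_seq_cond [X in _ <= X]big_seq_cond.
  by apply: ler_sum => c /andP[cs _]; apply: Pw.
apply/seteqP; split => w /=.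
  case=> Pw Hw; split => //; rewrite dotv_suml big_seq_cond [RHS]big_seq_cond.
  by apply: eq_bigr => c /andP[cs tc]; apply/eqP; apply: Hw.
case=> Pw; rewrite dotv_suml => /esym/eqP; rewrite -subr_eq0 -sumrB => /eqP E.
split => // c cs tc; apply/eqP.
have H0 : forall d, d \in s -> tight z d -> 0 <= d.1.2 - dotv d.1.1 w.
  by move=> d ds _; rewrite subr_ge0; apply: Pw.
by have := psum_eq0 _ _ _ H0 E c cs tc; move/eqP; rewrite subr_eq0 => /eqP ->.
Qed.

Lemma face_set0 : face Pset set0.
Proof.
exists 0, 1; split; first by move=> w _; rewrite dotv0l.
apply/seteqP; split => w //= [_]; rewrite dotv0l => /eqP; by rewrite eq_sym oner_eq0.
Qed.



Lemma gap_ball_gen (t : seq cstr) z : (forall c, c \in t -> dotv c.1.1 z <= c.1.2) ->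
  exists2 d, 0 < d & forall c, c \in t -> ~~ tight z c ->
    forall y, ball z d y -> dotv c.1.1 y < c.1.2.
Proof.
elim: t => [|c t IH] H; first by exists 1 => // c; rewrite in_nil.
have H' : forall d, d \in t -> dotv d.1.1 z <= d.1.2.
  by move=> d dt; apply: H; rewrite inE dt orbT.
have [d d0 Hd] := IH H'.
case: (boolP (tight z c)) => tc.
  exists d => // c'; rewrite inE => /orP[/eqP -> |c't]; [by rewrite tc | exact: Hd].
have g0 : 0 < c.1.2 - dotv c.1.1 z.
  have h := H c (mem_head _ _).
  by rewrite subr_gt0 lt_neqAle h andbT.
have [d1 d10 Hd1] := dotv_cont _ _ c.1.1 z _ g0.
have hm1 : Num.min d d1 <= d1 by rewrite ge_min lexx orbT.
have hm2 : Num.min d d1 <= d by rewrite ge_min lexx.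
exists (Num.min d d1); first by rewrite lt_min d0 d10.
move=> c'; rewrite inE => /orP[/eqP -> _ y Hy|c't tc' y Hy].
  have := Hd1 y (le_ball hm1 Hy).
  rewrite ltr_norml => /andP[h1 h2]; lra.
exact: Hd c' c't tc' y (le_ball hm2 Hy).
Qed.
Lemma aff_tight z y : aff_hull (Fz z) y -> forall c, c \in s -> tight z c -> tight y c.
Proof.
case=> l [Hl [Hsum ->]] c cs tc; rewrite /tight dotv_sumr.
have -> : \sum_(h <- l) dotv c.1.1 (h.2 *: h.1) = \sum_(h <- l) h.2 * c.1.2.
  rewrite big_seq [RHS]big_seq; apply: eq_bigr => h hl; rewrite dotvZr.
  by have [_ Hh] := Hl h hl; rewrite (eqP (Hh c cs tc)).
by rewrite -mulr_suml Hsum mul1r.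
Qed.

Lemma relint_Fz z : Pset z -> relint (Fz z) z.
Proof.
move=> Pz; split; first exact: Fz_self.
have [d d0 Hd] := gap_ball_gen s z Pz; exists d; split => // y Ha Hb.
split; last exact: aff_tight _ _ Ha.
move=> c cs; case: (boolP (tight z c)) => tc.
  by rewrite (eqP (aff_tight _ _ Ha c cs tc)).
exact/ltW/(Hd c cs tc y Hb).
Qed.

Lemma relint_tight z y : Pset z -> relint (Fz z) y ->
  forall c, c \in s -> tight y c = tight z c.
Proof.
move=> Pz [Fy [e [e0 He]]].
have key : forall c, c \in s -> tight y c -> forall w, Fz z w -> tight w c.
  move=> c cs tyc w Fw.
  have [M [M0 HM]] := entry_bound _ _ (fun i => y i 0 - w i 0).
  have hM1 : 0 < M + 1 by lra.
  pose t := e / (M + 1).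
  have t0 : 0 < t by apply: divr_gt0.
  have tM : t * (M + 1) = e by rewrite /t divfK // gt_eqF.
  pose q := (1 + t) *: y + ((- t) *: w + 0).
  have Aq : aff_hull (Fz z) q.
    exists [:: (y, 1 + t); (w, - t)]; split.
      by move=> h; rewrite !inE => /orP[/eqP -> //|/eqP -> //].
    split; first by rewrite !big_cons big_nil /= addr0 addrK.
    by rewrite !big_cons big_nil.
  have Bq : ball y e q.
    have E : forall a b : R, a - ((1 + t) * a + (- t * b + 0)) = t * (b - a).
      by move=> a b; ring.
    apply/ballE; split => // i; rewrite !mxE E normrM gtr0_norm // distrC; have := HM i => /= h.
    have : t * `|y i 0 - w i 0| <= t * M by apply: ler_wpM2l => //; apply: ltW.
    lra.
  have [Pq _] := He q Aq Bq.
  have := Pq c cs; rewrite /q !dotvDr !dotvZr dotv0r (eqP tyc).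
  have := Fz_P _ _ Fw c cs => h1 h2.
  apply/eqP/eqP; rewrite eq_le h1 /=.
  have : t * (c.1.2 - dotv c.1.1 w) <= 0 by lra.
  by rewrite pmulr_rle0 // subr_le0.
move=> c cs; apply/idP/idP => [tyc | tzc].
  exact: key c cs tyc z (Fz_self _ Pz).
by case: Fy => _ H; exact: H c cs tzc.
Qed.

Variable x0 : V.
Hypothesis Cx0 : sat s x0.

Lemma closure_sat : closure (sat s) = Pset.
Proof.
apply/seteqP; split => w.
  move=> Cw c cs; rewrite leNgt; apply/negP => Hlt.
  have g0 : 0 < dotv c.1.1 w - c.1.2 by rewrite subr_gt0.
  have [d d0 Hd] := dotv_cont _ _ c.1.1 w _ g0.
  have [y [Cy By]] := Cw _ (nbhsx_ballx w _ d0).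
  have := Hd y By; have := sat_P _ Cy c cs.
  rewrite ltr_norml => h /andP[h1 h2]; lra.
move=> Pw B /nbhs_ballP [e /= e0 HB].
have [M [M0 HM]] := entry_bound _ _ (fun i => w i 0 - x0 i 0).
have hM1 : 0 < M + e + 1 by lra.
pose t := e / (M + e + 1).
have t0 : 0 < t by apply: divr_gt0.
have tM : t * (M + e + 1) = e by rewrite /t divfK // gt_eqF.
have t1 : t < 1.
  rewrite /t ltr_pdivrMr //; lra.
pose y := (1 - t) *: w + t *: x0.
exists y; split.
  move=> c cs; have := Cx0 c cs; have := Pw c cs; rewrite /y dotvDr !dotvZr.
  case: c.2 => h1 h2.
    have : (1 - t) * dotv c.1.1 w <= (1 - t) * c.1.2 by apply: ler_wpM2l => //; lra.
    have : t * dotv c.1.1 x0 < t * c.1.2 by rewrite ltr_pM2l.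
    lra.
  have : (1 - t) * dotv c.1.1 w <= (1 - t) * c.1.2 by apply: ler_wpM2l => //; lra.
  have : t * dotv c.1.1 x0 <= t * c.1.2 by rewrite ler_pM2l.
  lra.
have E : forall a b : R, a - ((1 - t) * a + t * b) = t * (a - b) by move=> a b; ring.
apply: HB; apply/ballE; split => // i; rewrite !mxE.
rewrite E.
rewrite normrM gtr0_norm //; have := HM i => /= h.
have : t * `|w i 0 - x0 i 0| <= t * M by apply: ler_wpM2l => //; apply: ltW.
have : 0 < t * e by apply: mulr_gt0.
lra.
Qed.

Lemma polyP : polyhedron Pset.
Proof.
have Px0 := sat_P _ Cx0.
exists [seq (c.1.1, c.1.2) | c <- s & c.1.1 != 0]; split.
  by move=> h /mapP [c]; rewrite mem_filter => /andP[nz _] ->.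
apply/seteqP; split => z Hz.
  by move=> h /mapP [c]; rewrite mem_filter => /andP[_ cs] ->; exact: Hz c cs.
move=> c cs; case: (eqVneq c.1.1 0) => [e|ne].
  by have := Px0 c cs; rewrite e !dotv0l.
have hm : (c.1.1, c.1.2) \in [seq (c.1.1, c.1.2) | c <- s & c.1.1 != 0].
  by apply: (map_f (fun c : cstr => (c.1.1, c.1.2))); rewrite mem_filter ne cs.
exact: (Hz _ hm).
Qed.
Lemma min_point (S : set V) : (exists v, S v) ->
  exists2 v, S v & forall v', S v' -> (count (tight v) s <= count (tight v') s)%N.
Proof.
move=> [v0 Sv0].
pose Pn := fun n => `[< exists v, S v /\ count (tight v) s = n >].
have ex : exists n, Pn n by exists (count (tight v0) s); apply/asboolP; exists v0.
case: (ex_minnP ex) => n /asboolP [v [Sv cv]] Hmin.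
by exists v => // v' Sv'; rewrite cv; apply: Hmin; apply/asboolP; exists v'.
Qed.

Lemma count_sub (t : seq cstr) (a b : pred cstr) :
  (count a t <= count (predI a b) t)%N -> forall c, c \in t -> a c -> b c.
Proof.
elim: t => [|c t IH] //= H d; rewrite inE => /orP[/eqP ->{d} | dt] ad.
  have : (count (predI a b) t <= count a t)%N by apply: sub_count => x /andP[].
  by move: H; rewrite ad; case: (b c) => //= H1 H2; lia.
apply: IH dt ad.
have : (count (predI a b) t <= count a t)%N by apply: sub_count => x /andP[].
by move: H; case: (a c); case: (b c) => /= H1 H2; lia.
Qed.

Definition FF : set (set V) := [set F | F = set0 \/ exists2 z, sat s z & F = Fz z].

Lemma relint0 : relint (set0 : set V) = set0.
Proof. by apply/seteqP; split => y // [[]]. Qed.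

Theorem poly_main : polyhedron (closure (sat s)) /\
  exists FF0 : set (set V),
       (forall F, FF0 F -> face (closure (sat s)) F) /\
       sat s = \bigcup_(F in FF0) relint F /\
       (forall F G, FF0 F -> FF0 G -> F <> G -> relint F `&` relint G = set0) /\
       (forall F G, FF0 F -> FF0 G ->
          (exists J, [/\ FF0 J, F `<=` J, G `<=` J &
             forall K, FF0 K -> F `<=` K -> G `<=` K -> J `<=` K]) /\
          (exists M, [/\ FF0 M, M `<=` F, M `<=` G &
             forall K, FF0 K -> K `<=` F -> K `<=` G -> K `<=` M])).
Proof.
rewrite closure_sat; split; first exact: polyP.
exists FF; split.
  by move=> F [->|[z _ ->]]; [exact: face_set0 | exact: face_Fz].
split.
  apply/seteqP; split => y.
    move=> Cy; exists (Fz y); first by right; exists y.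
    exact: relint_Fz (sat_P _ Cy).
  case=> F [->|[z Cz ->]]; first by rewrite relint0.
  move=> Ry c cs; have Pz := sat_P _ Cz; have [Fy _] := Ry.
  have Py := Fz_P _ _ Fy.
  have tyz := relint_tight _ _ Pz Ry c cs.
  have := Cz c cs; have := Py c cs; case: c.2 => // h1 h2.
  rewrite lt_neqAle h1 andbT.
  have : ~~ tight z c by rewrite /tight lt_eqF.
  by rewrite -tyz.
split.
  move=> F G [->|[z Cz ->]] [->|[w Cw ->]] FG; rewrite ?relint0 ?set0I ?setI0 //.
  apply/seteqP; split => y // [R1 R2]; apply: FG.
  have Pz := sat_P _ Cz; have Pw := sat_P _ Cw.
  have t1 := relint_tight _ _ Pz R1; have t2 := relint_tight _ _ Pw R2.
  apply/seteqP; split; apply: Fz_sub => c cs.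
    by rewrite -t1 // t2.
  by rewrite -t2 // t1.
move=> F G HF HG; split.
  case: HF => [->|[z Cz ->]].
    by exists G; split => [| y [] | y | K _ _ H].
  case: HG => [->|[w Cw ->]].
    by exists (Fz z); split => [|y|y []|K _ H _]; [right; exists z | |].
  have Pz := sat_P _ Cz; have Pw := sat_P _ Cw.
  pose u := mid z w.
  exists (Fz u); split.
  - by right; exists u => //; apply: sat_mid.
  - by apply: Fz_sub => c cs; rewrite tight_mid // => /andP[].
  - by apply: Fz_sub => c cs; rewrite tight_mid // => /andP[].
  - move=> K [->|[v Cv ->]] Hz Hw; first by have := Hz z (Fz_self _ Pz).
    apply: Fz_sub => c cs tv; rewrite tight_mid //; apply/andP; split.
      exact: (Fz_subP _ _ Pz Hz c cs tv).
    exact: (Fz_subP _ _ Pw Hw c cs tv).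
case: HF => [->|[z Cz ->]].
  by exists set0; split => //; left.
case: HG => [->|[w Cw ->]].
  by exists set0; split => //; left.
have Pz := sat_P _ Cz; have Pw := sat_P _ Cw.
case: (pselect (exists v, [/\ sat s v, Fz z v & Fz w v])).
  move=> /min_point [v [Cv Fzv Fwv] Hmin].
  have Pv := sat_P _ Cv.
  exists (Fz v); split.
  - by right; exists v.
  - by apply: Fz_sub => c cs; case: Fzv => _ H; exact: H c cs.
  - by apply: Fz_sub => c cs; case: Fwv => _ H; exact: H c cs.
  - move=> K [->|[v' Cv' ->]] Kz Kw; first by move=> y [].
    have Pv' := sat_P _ Cv'.
    have Fzv' := Kz v' (Fz_self _ Pv'); have Fwv' := Kw v' (Fz_self _ Pv').
    pose u := mid v v'.
    have Su : [/\ sat s u, Fz z u & Fz w u].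
      by split; [apply: sat_mid | apply: Fz_mid | apply: Fz_mid].
    have := Hmin u Su.
    rewrite (@eq_in_count _ (tight u) (predI (tight v) (tight v'))); last first.
      by move=> c cs; rewrite /= tight_mid.
    move=> /count_sub H.
    by apply: Fz_sub => c cs tvc; apply: H.
move=> Hno; exists set0; split => //; first by left.
move=> K [->|[v Cv ->]] Kz Kw //.
exfalso; apply: Hno; exists v; split => //; [apply: Kz | apply: Kw];
  exact: Fz_self _ (sat_P _ Cv).
Qed.

End Poly.
Arguments sat {R m}.

Section Net.
Variable R : realType.

Lemma size_code p n0 (f : relu_net R p n0) x : size (relu_code f x) = neurons f.
Proof.
elim: f x => [n xi | n k W b g IH] x //=.
by rewrite size_cat size_map size_enum_ord IH.
Qed.

Lemma hamming0 N (u v : seq bool) : size u = N -> size v = N ->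
  (hamming N u v = 0%N <-> u = v).
Proof.
move=> su sv; rewrite /hamming; split.
  move=> /card0_eq H.
  apply: (@eq_from_nth _ false); first by rewrite su sv.
  move=> i ilt; rewrite su in ilt.
  apply/eqP; apply: contraT => Hne.
  by have := H (Ordinal ilt); rewrite mem_set.
by move=> ->; apply: eq_card0 => j; apply/negP => /set_mem /=; rewrite eqxx.
Qed.

Lemma relu_pos (t : R) : (0 < relu t) = (0 < t).
Proof. by rewrite /relu lt_max ltxx. Qed.
Lemma relu_id (t : R) : 0 < t -> relu t = t.
Proof. by move=> h; rewrite /relu; apply/max_idPr/ltW. Qed.
Lemma relu_0 (t : R) : ~~ (0 < t) -> relu t = 0.
Proof. by rewrite -leNgt => h; rewrite /relu; apply/max_idPl. Qed.

Lemma sat_cat m (s1 s2 : seq (cstr R m)) z : sat (s1 ++ s2) z <-> sat s1 z /\ sat s2 z.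
Proof.
split.
  by move=> H; split => c cs; apply: H; rewrite mem_cat cs ?orbT.
by case=> H1 H2 c; rewrite mem_cat => /orP[] cs; [apply: H1 | apply: H2].
Qed.

Lemma code_system p n0 (f : relu_net R p n0) (x : 'cV[R]_n0) :
  exists s : seq (cstr R n0), forall z, relu_code f z = relu_code f x <-> sat s z.
Proof.
elim: f x => [n xi | n k W b g IH] x /=.
  by exists [::] => z; split => // _ c; rewrite in_nil.
pose act := fun i : 'I_k => 0 < (W *m x + b) i 0.
have [s' Hs'] := IH (map_mx (@relu R) (W *m x + b)).
pose row := fun i : 'I_k => (\col_j W i j : 'cV[R]_n).
pose hd := fun i : 'I_k => (if act i then (- row i, b i 0, true)
  else (row i, - b i 0, false) : cstr R n).
pose K := fun c : cstr R k => \sum_i c.1.1 i 0 * (act i)%:R * b i 0.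
pose tr := fun c : cstr R k =>
  ((\col_j (\sum_i c.1.1 i 0 * (act i)%:R * W i j), c.1.2 - K c, c.2) : cstr R n).
exists ([seq hd i | i <- enum 'I_k] ++ [seq tr c | c <- s']) => z.
pose pat := forall i, (0 < (W *m z + b) i 0) = act i.
have Erow : forall i, dotv (row i) z = (W *m z) i 0.
  by move=> i; rewrite /dotv mxE; apply: eq_bigr => j _; rewrite mxE.
have hd_ok : forall i, (if (hd i).2 then dotv (hd i).1.1 z < (hd i).1.2
    else dotv (hd i).1.1 z <= (hd i).1.2) <-> (0 < (W *m z + b) i 0) = act i.
  move=> i; rewrite /hd mxE; case: (act i) => /=.
    have -> : (dotv (- row i) z < b i 0) = (0 < (W *m z) i 0 + b i 0).
      by rewrite dotvNl Erow; apply/idP/idP => h; lra.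
    by [].
  have -> : (dotv (row i) z <= - b i 0) = ~~ (0 < (W *m z) i 0 + b i 0).
    by rewrite Erow -leNgt; apply/idP/idP => h; lra.
  by split => [/negbTE|->].
have Aent : pat -> forall i, map_mx (@relu R) (W *m z + b) i 0 = (act i)%:R * (W *m z + b) i 0.
  move=> pz i; rewrite mxE; have := pz i; rewrite /act.
  case: (0 < (W *m x + b) i 0) => h.
    by rewrite relu_id ?h // mul1r.
  by rewrite relu_0 ?h // mul0r.
have Edot : pat -> forall c : cstr R k,
    dotv c.1.1 (map_mx (@relu R) (W *m z + b)) = dotv (tr c).1.1 z + K c.
  move=> pz c; rewrite /dotv.
  have -> : \sum_j (tr c).1.1 j 0 * z j 0 = \sum_i c.1.1 i 0 * (act i)%:R * (W *m z) i 0.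
    rewrite /=; under eq_bigr => j _ do rewrite mxE mulr_suml.
    rewrite exchange_big /=; apply: eq_bigr => i _; rewrite mxE mulr_sumr.
    by apply: eq_bigr => j _; rewrite mulrA.
  rewrite /K -big_split; apply: eq_bigr => i _; rewrite (Aent pz i) mxE.
  by rewrite mulrDr mulrDr !mulrA.
have pat_hd : pat <-> sat [seq hd i | i <- enum 'I_k] z.
  split.
    by move=> pz c /mapP [i _ ->]; apply/hd_ok.
  by move=> H i; apply/hd_ok; apply: H; apply: map_f; rewrite mem_enum.
have tr_ok : pat -> (sat s' (map_mx (@relu R) (W *m z + b)) <-> sat [seq tr c | c <- s'] z).
  move=> pz; split.
    move=> H c' /mapP [c cs ->]; have := H c cs; rewrite (Edot pz c) /=.
    by case: c.2 => h; lra.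
  move=> H c cs; have := H (tr c) (map_f _ cs); rewrite (Edot pz c) /=.
  by case: c.2 => h; lra.
rewrite sat_cat -pat_hd; split.
  move/eqP; rewrite eqseq_cat ?size_map // => /andP[/eqP H1 /eqP H2].
  have pz : pat.
    move=> i; move/eq_in_map: H1 => /(_ i) H1.
    have := H1 (mem_enum _ _); rewrite !mxE !relu_pos.
    by move=> h; rewrite /act !mxE; exact: h.
  by split => //; apply/tr_ok => //; apply/Hs'.
case=> pz Hs; have H1 : [seq 0 < map_mx (@relu R) (W *m z + b) i 0 | i <- enum 'I_k] =
    [seq 0 < map_mx (@relu R) (W *m x + b) i 0 | i <- enum 'I_k].
  by apply: eq_map => i; rewrite !mxE !relu_pos; have := pz i; rewrite /act !mxE.
rewrite H1; congr (_ ++ _); apply/Hs'; exact/(tr_ok pz).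
Qed.

End Net.

Theorem theorem1 (R : realType) (m p : nat) (f : relu_net R p m) :
  (* (1) code(x) |-> [x]_f is a bijection from the code space onto the classes *)
  set_bij (range (relu_code f)) (range (relu_class f))
    (fun c => [set z | hamming (neurons f) (relu_code f z) c = 0%N]) /\
  (forall x : 'cV[R]_m,
     (* (2) the closure of [x]_f is a polyhedron *)
     polyhedron (closure (relu_class f x)) /\
     (* (3) [x]_f is a disjoint union of relative interiors of faces of
        P = closure [x]_f, and these faces form a lattice under inclusion *)
     exists FF : set (set 'cV[R]_m),
       (forall F, FF F -> face (closure (relu_class f x)) F) /\
       relu_class f x = \bigcup_(F in FF) relint F /\
       (forall F G, FF F -> FF G -> F <> G -> relint F `&` relint G = set0) /\
       (forall F G, FF F -> FF G ->
          (exists J, [/\ FF J, F `<=` J, G `<=` J &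
             forall K, FF K -> F `<=` K -> G `<=` K -> J `<=` K]) /\
          (exists M, [/\ FF M, M `<=` F, M `<=` G &
             forall K, FF K -> K `<=` F -> K `<=` G -> K `<=` M]))).
Proof.
have H0 : forall z y, hamming (neurons f) (relu_code f z) (relu_code f y) = 0%N <->
    relu_code f z = relu_code f y.
  by move=> z y; apply: hamming0; apply: size_code.
split.
  split.
  - by move=> c [x _ <-]; exists x.
  - move=> c1 c2 /set_mem [x1 _ <-] /set_mem [x2 _ <-] E.
    have : [set z | hamming (neurons f) (relu_code f z) (relu_code f x2) = 0%N] x1.
      by rewrite -E /=; apply/H0.
    by move=> /= /H0.
  - by move=> X [x _ <-]; exists (relu_code f x) => //; exists x.
move=> x.
have [s Hs] := code_system _ _ _ f x.
have E : relu_class f x = sat s.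
  by apply/seteqP; split => z /= h; [apply/Hs/H0 | apply/H0/Hs].
have Cx : sat s x by apply/Hs.
rewrite E; exact: (poly_main _ _ _ _ Cx).
Qed.
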